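(* For every $u\in\Sigma^*$ and $v\in\Sigma^+$ there is a finite automaton $\mathcal{D}_{u\$v}$ over $\Sigma\cup\{\$\}$ (with $\$\notin\Sigma$) with $L(\mathcal{D}_{u\$v})=\{u'\$v'\mid u'\in\Sigma^*,\ v'\in\Sigma^+,\ u'v'^\omega=uv^\omega\}$ whose number of states is in $\mathcal{O}(|v|(|u|+|v|))$. *)

(* Defs.v *)
From mathcomp Require Import all_boot.
Set Implicit Arguments. Unset Strict Implicit. Unset Printing Implicit Defensive.

(* The extended alphabet Sigma ∪ {$} is [option Sigma]: [Some a] is the letter a
   of Sigma and [None] is the fresh separator symbol $. *)
Notation dollar := (@None _).

Record dfa (A : Type) := DFA {
  dfa_state :> finType;
  dfa_init : dfa_state;
  dfa_trans : dfa_state -> A -> dfa_state;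
  dfa_final : {pred dfa_state}
}.

Definition dfa_run (A : Type) (D : dfa A) (q : dfa_state D) (w : seq A) : dfa_state D :=
  foldl (@dfa_trans A D) q w.

Definition dfa_accept (A : Type) (D : dfa A) (w : seq A) : bool :=
  @dfa_final A D (dfa_run (@dfa_init A D) w).

Definition dfa_size (A : Type) (D : dfa A) : nat := #|dfa_state D|.

(* The ultimately periodic infinite word u v^omega, as a function nat -> option Sigma
   (it only takes values [Some _] when v is nonempty). *)
Definition lasso (S : Type) (u v : seq S) : nat -> option S :=
  fun i => if i < size u then nth None (map Some u) i
           else nth None (map Some v) ((i - size u) %% size v).

Definition omega_eq (S : Type) (u v u' v' : seq S) : Prop :=
  forall i, lasso u v i = lasso u' v' i.

Definition lasso_lang (S : Type) (u v : seq S) (w : seq (option S)) : Prop :=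
  exists u' v' : seq S,
    [/\ w = map Some u' ++ dollar :: map Some v', 0 < size v' & omega_eq u' v' u v].

(* Main.v *)
Require Import Defs.
From mathcomp Require Import all_boot.
From mathcomp Require Import zify.
From Stdlib Require Import ClassicalEpsilon.
Set Implicit Arguments. Unset Strict Implicit. Unset Printing Implicit Defensive.

Definition pdec (P : Prop) : bool := if excluded_middle_informative P then true else false.
Lemma pdecP P : reflect P (pdec P).
Proof. rewrite /pdec; case: excluded_middle_informative => h; constructor; done. Qed.

Definition per T (g : nat -> T) k := forall i, g i = g (i + k).

Lemma per_mul T (g : nat -> T) k : per g k -> forall t i, g i = g (i + k * t).
Proof.
move=> h; elim=> [|t IH] i; first by rewrite muln0 addn0.
transitivity (g (i + k * t)); first exact: IH.
rewrite h; congr g; rewrite mulnS; lia.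
Qed.

Lemma tail_mul T (g : nat -> T) n m (tail : forall i, n <= i -> g i = g (i + m)) :
  forall t j, n <= j -> g j = g (j + m * t).
Proof.
elim=> [|t IH] j hj; first by rewrite muln0 addn0.
rewrite IH // tail; last by lia.
congr g; rewrite mulnS; lia.
Qed.

Lemma per_add T (g : nat -> T) n m k (tail : forall i, n <= i -> g i = g (i + m)) :
  0 < k -> per g k -> per g (k + m).
Proof.
move=> k0 h i.
rewrite h (per_mul h n (i + k)) tail; last by nia.
rewrite [RHS](per_mul h n); congr g; lia.
Qed.

Lemma per_sub T (g : nat -> T) n m k (tail : forall i, n <= i -> g i = g (i + m)) :
  0 < k -> per g (k + m) -> per g k.
Proof.
move=> k0 h.
have tk : forall j, n <= j -> g j = g (j + k).
  move=> j hj; rewrite [RHS]tail; last by lia.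
  by rewrite h addnA.
move=> i.
rewrite (per_mul h n i) tk; last by nia.
rewrite [RHS](per_mul h n); congr g; lia.
Qed.

Lemma per_addm T (g : nat -> T) n m (tail : forall i, n <= i -> g i = g (i + m)) c t :
  0 < c -> per g (c + m * t) <-> per g c.
Proof.
move=> c0; elim: t => [|t IH]; first by rewrite muln0 addn0.
rewrite -IH (_ : c + m * t.+1 = (c + m * t) + m); last by rewrite mulnS; lia.
split; [apply: per_sub tail _|apply: per_add tail _]; lia.
Qed.

Lemma per_red T (g : nat -> T) n m k (tail : forall i, n <= i -> g i = g (i + m)) :
  0 < m -> 0 < k -> per g k <-> per g (if k %% m == 0 then m else k %% m).
Proof.
move=> m0 k0; have e := divn_eq k m.
case: eqP => hk.
  rewrite (_ : k = m + m * (k %/ m).-1); first by apply: per_addm tail _ _ _.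
  rewrite hk addn0 in e.
  move: (k %/ m) e => q e.
  case: q e => [|q] e; first by lia.
  rewrite /= e; nia.
rewrite {1}e (_ : k %/ m * m + k %% m = k %% m + m * (k %/ m)); last by lia.
apply: per_addm tail _ _ _; lia.
Qed.

Lemma per_m T (g : nat -> T) n m k (tail : forall i, n <= i -> g i = g (i + m)) :
  0 < m -> 0 < k -> per g k -> per g m.
Proof.
move=> m0 k0 h.
have h2 : per g (m + m * k.-1).
  move=> i; rewrite (per_mul h m i); congr g; nia.
by apply: (per_addm tail _ _).1 h2.
Qed.

Lemma lasso_tail S (u v : seq S) j : size u <= j -> lasso u v j = lasso u v (j + size v).
Proof.
rewrite /lasso => h; rewrite ltnNge h /= ltnNge (leq_trans h (leq_addr _ _)) /=.
by rewrite -addnBAC // modnDr.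
Qed.

Lemma lasso_tailn S (u v : seq S) t j : size u <= j -> lasso u v j = lasso u v (j + size v * t).
Proof. move=> h; apply: (tail_mul (@lasso_tail S u v)) h. Qed.

Definition red n m x := if x < n then x else n + (x - n) %% m.

Lemma red_lt n m x : 0 < m -> red n m x < n + m.
Proof. rewrite /red => m0; case: ifP => h; first lia. rewrite ltn_add2l ltn_pmod //. Qed.

Lemma red_shift S (u v : seq S) x i : 0 < size v ->
  lasso u v (red (size u) (size v) x + i) = lasso u v (x + i).
Proof.
rewrite /red => m0; case: ifP => hx //.
have e := divn_eq (x - size u) (size v).
rewrite (_ : x + i = size u + (x - size u) %% size v + i + size v * ((x - size u) %/ size v)).
  by rewrite -lasso_tailn //; lia.
move: ((x - size u) %/ size v) ((x - size u) %% size v) e => q r e; nia.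
Qed.

Lemma red_succ n m x : 0 < m -> red n m (red n m x + 1) = red n m (x + 1).
Proof.
rewrite /red => m0; case: (ltnP x n) => hx; first done.
set a := (x - n) %% m.
have -> : (n + a + 1 < n) = false by lia.
have -> : (x + 1 < n) = false by lia.
have -> : n + a + 1 - n = a + 1 by lia.
have -> : x + 1 - n = (x - n) + 1 by lia.
by rewrite modnDml.
Qed.

Lemma lasso_pre S (u v : seq S) i : i < size u -> lasso u v i = nth None (map Some u) i.
Proof. by rewrite /lasso => ->. Qed.

Lemma lasso_post S (u v : seq S) j : lasso u v (size u + j) = nth None (map Some v) (j %% size v).
Proof. by rewrite /lasso ltnNge leq_addr /= addKn. Qed.

Lemma omega_char S (u v u' v' : seq S) : 0 < size v' ->
  omega_eq u' v' u v <->
  [/\ forall i, i < size u' -> lasso u v i = nth None (map Some u') i,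
      forall j, j < size v' -> lasso u v (size u' + j) = nth None (map Some v') j &
      per (fun i => lasso u v (size u' + i)) (size v')].
Proof.
move=> m0; split.
  move=> h; split.
  - by move=> i hi; rewrite -h lasso_pre.
  - by move=> j hj; rewrite -h lasso_post modn_small.
  - by move=> i; rewrite /= -!h addnA -lasso_tail // leq_addr.
case=> h1 h2 h3 i.
case: (ltnP i (size u')) => hi; first by rewrite h1 // lasso_pre.
have -> : i = size u' + (i - size u') by lia.
rewrite lasso_post -h2 ?ltn_pmod //.
set j := i - size u'.
rewrite [in RHS](_ : size u' + j = size u' + (j %% size v' + size v' * (j %/ size v'))); last first.
  by rewrite {1}(divn_eq j (size v')); lia.
exact: (per_mul h3).
Qed.

Definition St (Sigma : finType) (u v : seq Sigma) : finType :=
  option ('I_(size u + size v).+1 + ('I_(size u + size v).+1 * 'I_(size v).+1 * bool))%type.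

Definition tr (Sigma : finType) (u v : seq Sigma) (q : St u v) (a : option Sigma) : St u v :=
  match q with
  | None => None
  | Some (inl p) =>
    match a with
    | Some x => if lasso u v p == Some x
                then Some (inl (inord (red (size u) (size v) (p + 1)))) else None
    | None => if pdec (per (fun i => lasso u v (p + i)) (size v))
              then Some (inr (p, inord 0, false)) else None
    end
  | Some (inr (r, c, b)) =>
    match a with
    | Some x => if lasso u v (r + c) == Some x
                then Some (inr (r, inord ((c + 1) %% size v), true)) else None
    | None => None
    end
  end.

Definition fin (Sigma : finType) (u v : seq Sigma) : {pred St u v} :=
  fun q => match q with
  | Some (inr (r, c, b)) =>
      b && pdec (per (fun i => lasso u v (r + i)) (if (c : nat) == 0 then size v else c))
  | _ => false
  end.

Definition Dl (Sigma : finType) (u v : seq Sigma) : dfa (option Sigma) :=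
  @DFA (option Sigma) (St u v) (Some (inl (inord 0))) (@tr Sigma u v) (@fin Sigma u v).

Lemma run_sink (Sigma : finType) (u v : seq Sigma) w : foldl (@tr Sigma u v) None w = None.
Proof. by elim: w. Qed.

Lemma run_pre (Sigma : finType) (u v : seq Sigma) (u' : seq Sigma) : 0 < size v ->
  ((forall i, i < size u' -> lasso u v i = nth None (map Some u') i) /\
    foldl (@tr Sigma u v) (Some (inl (inord 0))) (map Some u')
    = Some (inl (inord (red (size u) (size v) (size u')))))
  \/ (~ (forall i, i < size u' -> lasso u v i = nth None (map Some u') i) /\
    foldl (@tr Sigma u v) (Some (inl (inord 0))) (map Some u') = None).
Proof.
move=> m0; elim/last_ind: u' => [|s a [[h1 h2]|[h1 h2]]].
- left; split=> //=; congr (Some (inl (inord _))); rewrite /red; case: ifP => //.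
  by move/negbT; rewrite -leqNgt leqn0 => /eqP ->; rewrite mod0n.
- rewrite map_rcons foldl_rcons h2 /= size_rcons.
  have hr : red (size u) (size v) (size s) < (size u + size v).+1.
    by apply: leq_trans (red_lt _ _ m0) _.
  rewrite inordK // -[red _ _ _]addn0 red_shift // addn0.
  case: eqP => ha.
  + left; split; last first.
    by rewrite addn0 red_succ // addn1.
      move=> i; rewrite ltnS leq_eqVlt => /orP[/eqP ->|hi].
        by rewrite nth_rcons size_map ltnn eqxx ha.
      by rewrite nth_rcons size_map hi h1.
  + right; split=> // h; apply: ha.
    by rewrite h ?size_rcons // nth_rcons size_map ltnn eqxx.
- right; rewrite map_rcons foldl_rcons h2 /=; split=> // h; apply: h1 => i hi.
  by rewrite h ?size_rcons ?(ltn_trans hi) // nth_rcons size_map hi.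
Qed.

Lemma run_post (Sigma : finType) (u v : seq Sigma) (p : 'I_(size u + size v).+1) (v' : seq Sigma) :
  0 < size v -> per (fun i => lasso u v (p + i)) (size v) ->
  ((forall j, j < size v' -> lasso u v (p + j) = nth None (map Some v') j) /\
    foldl (@tr Sigma u v) (Some (inr (p, inord 0, false))) (map Some v')
    = Some (inr (p, inord (size v' %% size v), 0 < size v')))
  \/ (~ (forall j, j < size v' -> lasso u v (p + j) = nth None (map Some v') j) /\
    foldl (@tr Sigma u v) (Some (inr (p, inord 0, false))) (map Some v') = None).
Proof.
move=> m0 P; elim/last_ind: v' => [|s a [[h1 h2]|[h1 h2]]].
- by left; split=> //=; rewrite mod0n.
- rewrite map_rcons foldl_rcons h2 /= size_rcons.
  have hr : size s %% size v < (size v).+1 by apply: leq_trans (ltn_pmod _ m0) _.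
  rewrite inordK //.
  have -> : lasso u v (p + size s %% size v) = lasso u v (p + size s).
    rewrite [in RHS](_ : p + size s = p + (size s %% size v + size v * (size s %/ size v))).
      exact: (per_mul P).
    by rewrite {1}(divn_eq (size s) (size v)); lia.
  case: eqP => ha.
  + left; split; last by rewrite modnDml addn1.
    move=> i; rewrite ltnS leq_eqVlt => /orP[/eqP ->|hi].
      by rewrite nth_rcons size_map ltnn eqxx ha.
    by rewrite nth_rcons size_map hi h1.
  + right; split=> // h; apply: ha.
    by rewrite h ?size_rcons // nth_rcons size_map ltnn eqxx.
- right; rewrite map_rcons foldl_rcons h2 /=; split=> // h; apply: h1 => i hi.
  by rewrite h ?size_rcons ?(ltn_trans hi) // nth_rcons size_map hi.
Qed.

Lemma split_dollar S (w : seq (option S)) :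
  (exists u', w = map Some u') \/ exists u' rest, w = map Some u' ++ None :: rest.
Proof.
elim: w => [|[x|] w [[u' ->]|[u' [rest ->]]]].
- by left; exists [::].
- by left; exists (x :: u').
- by right; exists (x :: u'), rest.
- by right; exists [::], (map Some u').
- by right; exists [::], (map Some u' ++ None :: rest).
Qed.

Lemma per_ext T (g h : nat -> T) k : (forall i, g i = h i) -> per g k -> per h k.
Proof. by move=> e P i; rewrite -!e. Qed.

Lemma tail_sh S (u v : seq S) x : size u <= x + 0 ->
  forall i, size u <= i -> lasso u v (x + i) = lasso u v (x + i + size v).
Proof. move=> _ i hi; apply: lasso_tail; lia. Qed.

Theorem proposition3 :
  forall Sigma : finType, exists C : nat,
    forall (u v : seq Sigma), 0 < size v ->
      exists D : dfa (option Sigma),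
        (forall w, dfa_accept D w <-> lasso_lang u v w) /\
        dfa_size D <= C * (size v * (size u + size v)).
Proof.
move=> Sigma; exists 11 => u v m0; exists (Dl u v); split; last first.
  rewrite /dfa_size /= card_option card_sum !card_prod !card_ord card_bool.
  nia.
have tl : forall x i, size u <= i -> lasso u v (x + i) = lasso u v (x + (i + size v)).
  move=> x i hi; rewrite addnA; apply: lasso_tail; lia.
move=> w; rewrite /dfa_accept /dfa_run /=; split.
  case: (split_dollar w) => [[u' ->]|[u' [rest ->]]].
    by case: (run_pre u u' m0) => [[_ ->]|[_ ->]].
  rewrite foldl_cat /=.
  case: (run_pre u u' m0) => [[h1 ->]|[_ ->]]; last by rewrite /= run_sink.
  set p : 'I_(size u + size v).+1 := inord _.
  have hp : (p : nat) = red (size u) (size v) (size u').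
    by rewrite inordK //; apply: leq_trans (red_lt _ _ m0) _.
  have ext : forall i, lasso u v (p + i) = lasso u v (size u' + i).
    by move=> i; rewrite hp red_shift.
  rewrite /=; case: pdecP => P; last by rewrite run_sink.
  case: (split_dollar rest) => [[v' ->]|[v' [rest2 ->]]]; last first.
    rewrite foldl_cat.
    by case: (run_post v' m0 P) => [[_ ->]|[_ ->]]; rewrite /= run_sink.
  case: (run_post v' m0 P) => [[h2 ->]|[_ ->]] //=.
  move=> /andP[hv /pdecP hq].
  exists u', v'; split=> //; apply/omega_char => //; split=> //.
    by move=> j hj; rewrite -ext h2.
  have := per_ext ext hq.
  rewrite inordK; last by apply: leq_trans (ltn_pmod _ m0) _.
  by rewrite -(per_red (tl (size u')) m0 hv).
case=> u' [v' [-> hv /(omega_char _ _ _ hv) [h1 h2 h3]]].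
rewrite foldl_cat.
case: (run_pre u u' m0) => [[_ ->]|[h _]]; last by exfalso.
set p : 'I_(size u + size v).+1 := inord _.
have hp : (p : nat) = red (size u) (size v) (size u').
  by rewrite inordK //; apply: leq_trans (red_lt _ _ m0) _.
have ext : forall i, lasso u v (size u' + i) = lasso u v (p + i).
  by move=> i; rewrite hp red_shift.
have P : per (fun i => lasso u v (p + i)) (size v).
  apply: per_ext ext _; exact: (per_m (tl (size u')) m0 hv h3).
rewrite /=; case: pdecP => // _.
case: (run_post v' m0 P) => [[_ ->]|[h _]]; last first.
  by exfalso; apply: h => j hj; rewrite -ext h2.
rewrite /= hv /=; apply/pdecP.
rewrite inordK; last by apply: leq_trans (ltn_pmod _ m0) _.
apply: per_ext ext _.
by rewrite -(per_red (tl (size u')) m0 hv).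
Qed.
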